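(* Let $G=(V,E)$ be a tree on a non-empty finite vertex set $V$, and let $\{A_v\}_{v\in V}$ be events in a probability space. Then \[ \Pr\Big(\bigcup_{v\in V} A_v\Big) \;\ge\; \frac{1}{\alpha(G)}\Big(\sum_{v\in V}\Pr(A_v) - \sum_{\{v,w\}\in E}\Pr(A_v\cap A_w)\Big). \]
   Context: $\alpha(G)$ denotes the independence number of $G$ (maximum size of a set of pairwise non-adjacent vertices). *)

(* Defs.v *)
From mathcomp Require Import all_boot.
From Stdlib Require Import Reals.
Set Implicit Arguments.
Unset Strict Implicit.
Unset Printing Implicit Defensive.

Definition simple_graph (T : finType) (e : rel T) : Prop :=
  symmetric e /\ irreflexive e.

Definition has_cycle (T : finType) (e : rel T) : Prop :=
  exists c : seq T, [/\ 3 <= size c, uniq c & cycle e c].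

Definition is_tree (T : finType) (e : rel T) : Prop :=
  [/\ simple_graph e, (forall x y : T, connect e x y) & ~ has_cycle e].

Definition independent (T : finType) (e : rel T) (S : {set T}) : bool :=
  [forall x in S, forall y in S, ~~ e x y].

Definition alpha (T : finType) (e : rel T) : nat :=
  \max_(S : {set T} | independent e S) #|S|.

Definition edges (T : finType) (e : rel T) : {set {set T}} :=
  [set [set x.1; x.2] | x in [set x : T * T | e x.1 x.2]].

Record prob_space (Omega : Type) := ProbSpace {
  measurable : (Omega -> Prop) -> Prop;
  Pr : (Omega -> Prop) -> R;
  measurable_full : measurable (fun _ => True);
  measurable_compl : forall A, measurable A -> measurable (fun w => ~ A w);
  measurable_cunion : forall F : nat -> Omega -> Prop,
      (forall n, measurable (F n)) -> measurable (fun w => exists n, F n w);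
  Pr_nonneg : forall A, measurable A -> (0 <= Pr A)%R;
  Pr_full : Pr (fun _ => True) = 1%R;
  Pr_sigma_additive : forall F : nat -> Omega -> Prop,
      (forall n, measurable (F n)) ->
      (forall m n, m <> n -> forall w, F m w -> F n w -> False) ->
      infinite_sum (fun n => Pr (F n)) (Pr (fun w => exists n, F n w))
}.

(* Main.v *)
Require Import Defs.
From HB Require Import structures.
From mathcomp Require Import all_boot.
Set Implicit Arguments. Unset Strict Implicit. Unset Printing Implicit Defensive.

Section Graph.
Variables (T : finType) (e : rel T) (x0 : T).
Hypothesis esym : symmetric e.
Hypothesis eirr : irreflexive e.
Hypothesis econn : forall x y, connect e x y.
Hypothesis eacyc : ~ has_cycle e.

Fixpoint Rk (n : nat) : {set T} := match n with
  | 0 => [set x0]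
  | n'.+1 => Rk n' :|: [set y | [exists x in Rk n', e x y]] end.

Lemma Rk_mono n m : n <= m -> Rk n \subset Rk m.
Proof.
move=> le; rewrite -(subnKC le); elim: (m - n) => [|k IH]; first by rewrite addn0.
by rewrite addnS /=; apply: (subset_trans IH); apply: subsetUl.
Qed.

Lemma Rk_edge n x y : x \in Rk n -> e x y -> y \in Rk n.+1.
Proof. by move=> xn exy /=; rewrite !inE; apply/orP; right; apply/existsP; exists x; rewrite xn. Qed.

Lemma Rk_all v : exists n, v \in Rk n.
Proof.
have /connectP [p pp ->] := econn x0 v.
suff: forall x n, x \in Rk n -> path e x p -> last x p \in Rk (n + size p).
  by move=> H; exists (0 + size p); apply: H => //; rewrite inE.
elim: p {pp} => [|y p IH] x n xn /=; first by rewrite addn0.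
case/andP=> exy py; rewrite addnS -addSn; apply: IH => //; exact: Rk_edge exy.
Qed.

Definition d v := ex_minn (Rk_all v).

Lemma d_in v : v \in Rk (d v).
Proof. by rewrite /d; case: ex_minnP. Qed.
Lemma d_min v n : v \in Rk n -> d v <= n.
Proof. by rewrite /d; case: ex_minnP => m _ H /H. Qed.
Lemma notin_lt v n : n < d v -> v \notin Rk n.
Proof. by move=> lt; apply/negP => /d_min; rewrite leqNgt lt. Qed.
Lemma d0 v : d v = 0 -> v = x0.
Proof. by move=> H; have := d_in v; rewrite H inE => /eqP. Qed.
Lemma x0_in n : x0 \in Rk n.
Proof. by apply: (subsetP (Rk_mono (leq0n n))); rewrite inE. Qed.

Definition par v := odflt v [pick x in Rk (d v).-1 | e x v].

Lemma par_spec v : v != x0 -> (par v \in Rk (d v).-1) && e (par v) v.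
Proof.
move=> nv; have dp : 0 < d v by rewrite lt0n; apply/negP => /eqP /d0 /eqP; rewrite (negbTE nv).
have vin := d_in v; rewrite -(prednK dp) /= in vin.
have vout : v \notin Rk (d v).-1 by apply: notin_lt; rewrite prednK.
move: vin; rewrite inE (negbTE vout) /= inE => /existsP [x /andP [xin exv]].
rewrite /par; case: pickP => [y /andP [-> ->] //|/(_ x)]; by rewrite xin exv.
Qed.

Lemma par_d v : v != x0 -> d (par v) < d v.
Proof.
move=> nv; have /andP [pin _] := par_spec nv.
have dp : 0 < d v by rewrite lt0n; apply/negP => /eqP /d0 /eqP; rewrite (negbTE nv).
by apply: (leq_ltn_trans (d_min pin)); rewrite prednK.
Qed.

Definition er (S : {set T}) := [rel a b | [&& e a b, a \in S & b \in S]].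
Definition ev v := [rel a b | [&& e a b, a != v & b != v]].

Lemma Rk_conn n x : x \in Rk n -> connect (er (Rk n)) x0 x.
Proof.
elim: n x => [|n IH] x /=; first by rewrite inE => /eqP ->.
have lift : forall y z, connect (er (Rk n)) y z -> connect (er (Rk n.+1)) y z.
  move=> y z; apply: connect_sub => a b /= /and3P [eab ain bin]; apply: connect1.
  by rewrite /= eab !(subsetP (Rk_mono (leqnSn n))).
rewrite inE => /orP [xin|]; first by apply: lift; apply: IH.
rewrite inE => /existsP [y /andP [yin eyx]].
apply: (connect_trans (lift _ _ (IH _ yin))); apply: connect1.
by rewrite /= eyx (Rk_edge yin eyx) (subsetP (Rk_mono (leqnSn n))).
Qed.

Lemma path_ev v x p : path (ev v) x p -> all (fun y => y != v) p.
Proof. by elim: p x => //= y p IH x /andP [/and3P [_ _ ->] /IH]. Qed.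

Lemma key v a b : e v a -> e v b -> a != b -> ~~ connect (ev v) a b.
Proof.
move=> eva evb nab; apply/negP => /connectP [p pp bq].
rewrite bq in evb nab; move: evb nab.
case: (shortenP pp) => p' pp' up' _ evb nab.
apply: eacyc; exists [:: v, a & p']; split.
- by case: p' {pp' up' evb} nab => //=; rewrite eqxx.
- move: up'; rewrite /= inE negb_or => /andP [-> ->]; rewrite !andbT.
  apply/andP; split.
    by apply/negP => /eqP av; move: eva; rewrite av eirr.
  by apply/negP => /(allP (path_ev pp')) /=; rewrite eqxx.
- rewrite /= rcons_path /= eva /= esym evb andbT.
  by apply: sub_path pp' => x y /and3P [].
Qed.

Lemma par_edge_le u v : d u <= d v -> e u v -> v != x0 /\ u = par v.
Proof.
move=> le euv.
have nv : v != x0.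
  apply/negP => /eqP vx; move: le; rewrite vx.
  have -> : d x0 = 0 by apply/eqP; rewrite -leqn0; apply: d_min; rewrite inE.
  rewrite leqn0 => /eqP /d0 ux; by move: euv; rewrite ux vx eirr.
split => //; apply/eqP/negP => /negP nua.
have /andP [ain eav] := par_spec nv.
set k := (d v).-1 in ain.
have vout : v \notin Rk k by apply: notin_lt; rewrite /k prednK // (leq_ltn_trans _ (par_d nv)).
have sub : forall x y, connect (er (Rk k)) x y -> connect (ev v) x y.
  move=> x y; apply: connect_sub => a b /= /and3P [eab ain' bin]; apply: connect1.
  rewrite /= eab /=; apply/andP; split; [apply: contraNneq vout => <- | apply: contraNneq vout => <-] => //.
have cax : connect (ev v) (par v) x0.
  apply: sub; rewrite (sym_connect_sym _) ?Rk_conn //.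
  by move=> x y /=; rewrite esym; case: (x \in _); case: (y \in _); rewrite ?andbF.
apply: (negP (key (v:=v) (a:=par v) (b:=u) _ _ _)).
- by rewrite esym.
- by rewrite esym.
- by rewrite eq_sym.
case uin : (u \in Rk k).
  by apply: (connect_trans cax); apply: sub; apply: Rk_conn.
have nu : u != x0 by apply/negP => /eqP ux; move: uin; rewrite ux x0_in.
have /andP [bin ebu] := par_spec nu.
have bin' : par u \in Rk k by apply: (subsetP (Rk_mono _) _ bin); rewrite /k; rewrite -!subn1 leq_sub2r.
apply: (connect_trans cax); apply: (connect_trans (sub _ _ (Rk_conn bin'))).
apply: connect1; rewrite /= ebu /=; apply/andP; split.
  by apply: contraNneq vout => <-.
by apply: contraTneq euv => ->; rewrite eirr.
Qed.

Lemma par_edge u v : e u v -> (v != x0 /\ u = par v) \/ (u != x0 /\ v = par u).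
Proof.
move=> euv; case: (leqP (d u) (d v)) => le; first by left; apply: par_edge_le.
by right; apply: par_edge_le; [apply: ltnW | rewrite esym].
Qed.

Lemma card_bound (S : {set T}) : #|S| <= alpha e + #|[set s in edges e | s \subset S]|.
Proof.
set B := [set v | (v != x0) && (par v \in S)].
rewrite -(cardsID B S) addnC; apply: leq_add.
  rewrite /alpha; apply: (@leq_bigmax_cond _ (fun S0 => independent e S0) (fun S0 : {set T} => #|S0|)).
  apply/forallP => x; apply/implyP => xin; apply/forallP => y; apply/implyP => yin.
  apply/negP => /par_edge [[ny xp]|[nx yp]].
    by move: yin xin; rewrite !inE ny -xp /= => /andP [/negP H _] /andP [_ /H].
  by move: xin yin; rewrite !inE nx -yp /= => /andP [/negP H _] /andP [_ /H].
set f := fun v => [set v; par v].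
rewrite -(@card_in_imset _ _ f).
  apply: subset_leq_card; apply/subsetP => s /imsetP [v vin ->].
  move: vin; rewrite !inE => /and3P [vS nv pin].
  apply/andP; split.
    apply/imsetP; exists (v, par v) => //; rewrite inE /= esym.
    by case/andP: (par_spec nv).
  by apply/subsetP => x; rewrite !inE => /orP [/eqP ->|/eqP ->].
move=> u v; rewrite !inE => /and3P [_ nu _] /and3P [_ nv _] fuv.
have : u \in f v by rewrite -fuv /f !inE eqxx.
have : v \in f u by rewrite fuv /f !inE eqxx.
rewrite /f !inE => /orP [/eqP -> //|/eqP vp] /orP [/eqP -> //|/eqP up].
have := par_d nu; have := par_d nv; rewrite -vp -up => h1 h2.
by have := ltn_trans h1 h2; rewrite ltnn.
Qed.

End Graph.

From Stdlib Require Import Reals Lra Lia ClassicalEpsilon FunctionalExtensionality PropExtensionality.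
Section Prob.
Variables (Omega : Type) (P : prob_space Omega).

Lemma pext (X Y : Omega -> Prop) : (forall w, X w <-> Y w) -> X = Y.
Proof. intros H; apply functional_extensionality; intro w; apply propositional_extensionality; auto. Qed.

Lemma meas_empty : measurable P (fun _ => False).
Proof.
replace (fun _ : Omega => False) with (fun w : Omega => ~ (fun _ => True) w) by (apply pext; tauto).
apply measurable_compl, measurable_full.
Qed.

Lemma meas_union X Y : measurable P X -> measurable P Y -> measurable P (fun w => X w \/ Y w).
Proof.
intros HX HY; pose F := fun n : nat => match n with 0 => X | _ => Y end.
replace (fun w => X w \/ Y w) with (fun w => exists n, F n w).
- apply measurable_cunion; intros [|n]; auto.
- apply pext; intro w; split.
  + intros [[|n] H]; auto.
  + intros [H|H]; [exists 0%nat | exists 1%nat]; auto.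
Qed.

Lemma meas_compl X : measurable P X -> measurable P (fun w => ~ X w).
Proof. apply measurable_compl. Qed.

Lemma meas_inter X Y : measurable P X -> measurable P Y -> measurable P (fun w => X w /\ Y w).
Proof.
intros HX HY.
replace (fun w => X w /\ Y w) with (fun w => ~ (~ X w \/ ~ Y w)).
- apply meas_compl, meas_union; apply meas_compl; auto.
- apply pext; intro w; split.
  + intro H; destruct (classic (X w)), (classic (Y w)); tauto.
  + tauto.
Qed.

Lemma Pr_empty : Pr P (fun _ => False) = 0%R.
Proof.
have H := Pr_sigma_additive (F := fun _ _ => False) (fun _ => meas_empty) (fun _ _ _ _ h _ => h).
replace (fun w : Omega => exists _ : nat, False) with (fun _ : Omega => False) in H
  by (apply pext; intro w; split; [tauto | intros [_ h]; exact h]).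
set c := Pr P (fun _ => False) in H *.
destruct (Req_dec c 0) as [E|E]; auto.
have Hc : (0 < Rabs c)%R by apply Rabs_pos_lt.
destruct (H (Rabs c / 4)%R) as [N HN]; [lra|].
have H1 := HN N (le_n N); have H2 := HN (S N) (le_S _ _ (le_n N)).
unfold R_dist in H1, H2; rewrite tech5 in H2.
apply Rabs_def2 in H1; apply Rabs_def2 in H2.
destruct (Rcase_abs c) as [Hn|Hp].
- rewrite (Rabs_left c Hn) in H1 H2; lra.
- rewrite (Rabs_right c Hp) in H1 H2; lra.
Qed.

Lemma Pr_add X Y : measurable P X -> measurable P Y -> (forall w, X w -> Y w -> False) ->
  Pr P (fun w => X w \/ Y w) = (Pr P X + Pr P Y)%R.
Proof.
intros HX HY D.
pose F := fun n : nat => match n with 0 => X | 1 => Y | _ => fun _ => False end.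
have HF : forall n, measurable P (F n) by intros [|[|n]]; simpl; auto using meas_empty.
have HD : forall m n, m <> n -> forall w, F m w -> F n w -> False.
  intros [|[|m]] [|[|n]] Hmn w; simpl; try tauto; try congruence; intros; eapply D; eauto.
have H := Pr_sigma_additive HF HD.
replace (fun w => exists n, F n w) with (fun w => X w \/ Y w) in H.
2:{ apply pext; intro w; split.
    - intros [H0|H0]; [exists 0%nat | exists 1%nat]; auto.
    - intros [[|[|n]] H0]; simpl in H0; tauto. }
apply (uniqueness_sum _ _ _ H).
intros eps Heps; exists 1%nat; intros n Hn.
have -> : sum_f_R0 (fun n => Pr P (F n)) n = (Pr P X + Pr P Y)%R.
{ induction n as [|n IH]; [lia|].
  destruct n as [|n]; [simpl; reflexivity|].
  rewrite tech5 IH; [|lia]; simpl; rewrite Pr_empty; ring. }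
unfold R_dist; rewrite Rminus_diag Rabs_R0; lra.
Qed.

End Prob.

Lemma Rplus_assoc' : associative Rplus. Proof. move=> x y z; ring. Qed.
HB.instance Definition _ := Monoid.isComLaw.Build R 0%R Rplus Rplus_assoc' Rplus_comm Rplus_0_l.

Lemma iter_Rplus (c : R) n : iter n (Rplus c) 0%R = (INR n * c)%R.
Proof. induction n as [|n IH]; [simpl; ring|]; rewrite S_INR /= IH; ring. Qed.

Lemma sum_const_pred (I : finType) (Q : pred I) (c : R) :
  \big[Rplus/0%R]_(i | Q i) c = (INR #|[set i | Q i]| * c)%R.
Proof.
rewrite (eq_bigl (fun i => i \in [set i | Q i])); last by move=> i; rewrite inE.
by rewrite big_const iter_Rplus.
Qed.

Lemma sum_count (I J : finType) (D : pred I) (f : I -> J -> bool) (p : J -> R) :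
  \big[Rplus/0%R]_(i | D i) \big[Rplus/0%R]_(S | f i S) p S =
  \big[Rplus/0%R]_(S : J) (INR #|[set i | D i && f i S]| * p S)%R.
Proof.
under eq_bigr do rewrite big_mkcond.
rewrite exchange_big; apply: eq_bigr => S _.
by rewrite -big_mkcondr sum_const_pred.
Qed.

Lemma sum_mull (I : finType) (Q : pred I) (F : I -> R) c :
  (c * \big[Rplus/0%R]_(i | Q i) F i)%R = \big[Rplus/0%R]_(i | Q i) (c * F i)%R.
Proof.
apply: (big_ind2 (fun x y => c * x = y)%R); first by ring.
  by move=> x1 x2 y1 y2 <- <-; ring.
by [].
Qed.

Lemma sum_le (I : finType) (F G : I -> R) :
  (forall i, F i <= G i)%R ->
  (\big[Rplus/0%R]_(i : I) F i <= \big[Rplus/0%R]_(i : I) G i)%R.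
Proof.
move=> H; apply: (big_ind2 (fun x y => x <= y)%R); first by apply: Rle_refl.
  by move=> x1 x2 y1 y2 h1 h2; apply: Rplus_le_compat.
by move=> i _; apply: H.
Qed.

Lemma aux1 (a c p x : R) : (0 <= p)%R -> (x <= a + c)%R -> (x * p <= c * p + a * p)%R.
Proof. move=> hp hx; have := Rmult_le_compat_r _ _ _ hp hx; lra. Qed.
Lemma aux2 (a c p : R) : (0 <= c)%R -> (0 <= p)%R -> (0 * p <= c * p + a * 0)%R.
Proof. move=> hc hp; have := Rmult_le_pos _ _ hc hp; lra. Qed.

Section Main.
Variables (T : finType) (Omega : Type) (P : prob_space Omega) (A : T -> Omega -> Prop).
Hypothesis HA : forall v, measurable P (A v).

Definition pb (Q : Prop) : bool := if excluded_middle_informative Q then true else false.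
Definition pat (w : Omega) : {set T} := [set v | pb (A v w)].

Lemma mem_pat v w : v \in pat w <-> A v w.
Proof. rewrite inE /pb; case: excluded_middle_informative => h; split => //. Qed.

Definition B (S : {set T}) := fun w => pat w = S.

Lemma meas_ext (X Y : Omega -> Prop) : (forall w, X w <-> Y w) -> measurable P Y -> measurable P X.
Proof. by move=> H; rewrite (pext H). Qed.

Lemma meas_all (C : T -> Omega -> Prop) (s : seq T) :
  (forall v, measurable P (C v)) -> measurable P (fun w => forall v, v \in s -> C v w).
Proof.
move=> HC; elim: s => [|a s IH].
  apply: (@meas_ext _ (fun _ => True)); last exact: measurable_full.
  by move=> w; split => // _ v.
apply: (@meas_ext _ (fun w => C a w /\ (forall v, v \in s -> C v w))); last by apply: meas_inter.
move=> w; split.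
  by move=> h; split; [apply: h; rewrite inE eqxx | move=> v vs; apply: h; rewrite inE vs orbT].
by move=> [h1 h2] v; rewrite inE => /orP [/eqP -> //|/h2].
Qed.

Lemma meas_B S : measurable P (B S).
Proof.
apply: (@meas_ext _ (fun w => forall v, v \in enum T -> (if v \in S then A v w else ~ A v w))).
  move=> w; split.
    move=> h v _; rewrite /B in h; rewrite -h; case vp: (v \in pat w).
      by apply/mem_pat.
    by move/mem_pat; rewrite vp.
  move=> h; apply/setP => v; have := h v; rewrite mem_enum => /(_ isT).
  case: (v \in S); case vp: (v \in pat w) => //.
    by move=> /mem_pat; rewrite vp.
  by move: vp => /mem_pat.
apply: meas_all => v; case: (v \in S) => //; exact: meas_compl.
Qed.

Lemma Pr_seq (L : seq {set T}) : uniq L ->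
  measurable P (fun w => pat w \in L) /\
  Pr P (fun w => pat w \in L) = \big[Rplus/0%R]_(S <- L) Pr P (B S).
Proof.
elim: L => [|S L IH] /=.
  have -> : (fun w => is_true (pat w \in [::])) = (fun _ : Omega => False).
    by apply: pext => w; split.
  by rewrite big_nil Pr_empty; split => //; apply: meas_empty.
move=> /andP [nS /IH [m e]].
have -> : (fun w => is_true (pat w \in S :: L)) = (fun w => B S w \/ pat w \in L).
  apply: pext => w; rewrite inE; split.
    by move/orP => [/eqP h|h]; [left|right].
  by move=> [->|->]; rewrite ?eqxx ?orbT.
split; first by apply: meas_union => //; apply: meas_B.
rewrite Pr_add ?big_cons ?e //; first by apply: meas_B.
by move=> w; rewrite /B => ->; move/negP: nS.
Qed.

Lemma Pr_pred (Q : pred {set T}) :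
  Pr P (fun w => Q (pat w)) = \big[Rplus/0%R]_(S | Q S) Pr P (B S).
Proof.
have [_ e] := Pr_seq (filter_uniq Q (index_enum_uniq {set T})).
rewrite big_filter in e; rewrite -e; congr (Pr P _).
by apply: pext => w; rewrite mem_filter mem_index_enum andbT.
Qed.

End Main.

Theorem corollary1 (T : finType) (e : rel T) (x0 : T) (Omega : Type)
  (P : prob_space Omega) (A : T -> Omega -> Prop) :
  is_tree e ->
  (forall v, measurable P (A v)) ->
  (Pr P (fun w => exists v, A v w) >=
     / INR (alpha e) *
     (\big[Rplus/0%R]_(v : T) Pr P (A v)
      - \big[Rplus/0%R]_(s in edges e) Pr P (fun w => forall v, v \in s -> A v w)))%R.
Proof.
move=> [[esym eirr] econn eacyc] HA.
set p := fun S => Pr P (B A S).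
have E1 : forall v, Pr P (A v) = \big[Rplus/0%R]_(S : {set T} | v \in S) p S.
  move=> v; rewrite -(Pr_pred HA); congr (Pr P _); apply: pext => w; rewrite mem_pat //.
have E2 : forall s : {set T}, Pr P (fun w => forall v, v \in s -> A v w) =
    \big[Rplus/0%R]_(S : {set T} | s \subset S) p S.
  move=> s; rewrite -(Pr_pred HA); congr (Pr P _); apply: pext => w; split.
    by move=> h; apply/subsetP => v /h /mem_pat.
  by move/subsetP => h v /h /mem_pat.
have E3 : Pr P (fun w => exists v, A v w) = \big[Rplus/0%R]_(S : {set T} | S != set0) p S.
  rewrite -(Pr_pred HA); congr (Pr P _); apply: pext => w; split.
    by move=> [v /mem_pat h]; apply/set0Pn; exists v.
  by move/set0Pn => [v /mem_pat h]; exists v.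
rewrite E3 (eq_bigr _ (fun v _ => E1 v)) (eq_bigr _ (fun s _ => E2 s)).
rewrite !sum_count.
have pnn : forall S, (0 <= p S)%R by move=> S; apply: Pr_nonneg; apply: meas_B.
have apos : (0 < INR (alpha e))%R.
  apply: lt_0_INR; apply/ltP.
  have -> : 0%N = (#|[set x0]|).-1 by rewrite cards1.
  apply: (leq_trans _ (@leq_bigmax_cond _ (fun S0 => independent e S0) (fun S0 : {set T} => #|S0|) [set x0] _)).
    by rewrite cards1.
  apply/forallP => x; apply/implyP; rewrite inE => /eqP ->.
  apply/forallP => y; apply/implyP; rewrite inE => /eqP ->; by rewrite eirr.
set a := INR (alpha e) in apos *.
set X := \big[Rplus/0%R]_(S : {set T}) (INR #|[set i : T | true & i \in S]| * p S)%R.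
set Y := \big[Rplus/0%R]_(S : {set T}) (INR #|[set i in edges e | i \subset S]| * p S)%R.
set u := \big[Rplus/0%R]_(S : {set T} | S != set0) p S.
have key : (X <= Y + a * u)%R.
  rewrite /u big_mkcond sum_mull /Y -big_split /=; apply: sum_le => S.
  have -> : #|[set i : T | true & i \in S]| = #|S| by apply: eq_card => i; rewrite inE.
  case: (boolP (S != set0)) => hS.
    have hb : (#|S| <= alpha e + #|[set s in edges e | s \subset S]|)%N by apply: card_bound.
    move/leP: hb => hb; have := le_INR _ _ hb; rewrite plus_INR => h.
    by apply: aux1 => //; apply: pnn.
  move/negPn/eqP: hS => ->; rewrite cards0 /=.
  by apply: aux2; [apply: pos_INR | apply: pnn].
apply: Rle_ge.
have H1 : (/ a * (X - Y) <= / a * (a * u))%R.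
  apply: Rmult_le_compat_l; [left; apply: Rinv_0_lt_compat; exact: apos | lra].
have H2 : (/ a * (a * u) = u)%R by field; lra.
lra.
Qed.
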